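(* Let $T$ be as in the context. If a directed cycle in $T$ contains exactly $l$ restricted vertices, then it contains exactly $l$ floor vertices.
   Context: Let $A$ be a finite alphabet with a linear order $<$, extended to the lexicographic order on words. Let $\mathcal{F}$ be a set of words over $A$ (forbidden words). A word $w$ is in the language if the bi-infinite periodic sequence $\cdots www\cdots$ contains no element of $\mathcal{F}$ as a factor; $W_k$ denotes the set of words of length $k$ in the language. Fix $n\geq 1$ and consider the digraph with vertex set $A^n$ and arcs $(as,sb)$ for $a,b\in A$, $s\in A^{n-1}$, $asb\in W_{n+1}$, the label of $(as,sb)$ being $b$. The de Bruijn graph of span $n$, $G_n$, is a strongly connected component of maximum size of this digraph; vertices are identified with their words. Let $m=m_1\cdots m_n$ be the vertex of $G_n$ whose word is lexicographically largest. For each vertex $v$, let $e(v)$ be the arc of $G_n$ with tail $v$ having maximum label, and $\gamma(v)$ its label. $T$ is the spanning subgraph of $G_n$ with arc set $\{e(v): v\in V(G_n), v\neq m\}$ (so $m$ lies on no cycle of $T$). For a vertex $u\neq m$, $g(u)$ is the longest word which is both a prefix of $m$ and a suffix of $u$ (possibly empty), and $\alpha(u)=m_{|g(u)|+1}$. A vertex $u\ne m$ is a floor vertex if $g(u)$ is the empty word, and a restricted vertex if $\gamma(u)<\alpha(u)$. *)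

(* Defs.v *)
From mathcomp Require Import all_boot.
From mathcomp Require Import boolp.
From Stdlib Require Import Relation_Operators.
Set Implicit Arguments. Unset Strict Implicit. Unset Printing Implicit Defensive.

(* Alphabet: 'I_q with its natural linear order (any finite linearly ordered
   alphabet is order-isomorphic to some 'I_q).  Words: seq 'I_q. *)
Section DeBruijn.
Variable q : nat.
Notation word := (seq 'I_q).

(* u is a factor of the bi-infinite periodic sequence ...www... *)
Definition periodic_factor (w u : word) : Prop :=
  exists i : nat, forall j, j < size u -> onth u j = onth w ((i + j) %% size w).

Definition in_lang (F : word -> Prop) (w : word) : Prop :=
  0 < size w /\ forall u, F u -> ~ periodic_factor w u.

Variable n : nat.
Notation vtx := (n.-tuple 'I_q).

(* arc (as, sb) with label b, i.e. w = s b where v = a s, and a s b in W_{n+1} *)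
Definition arc_lab (F : word -> Prop) (v : vtx) (b : 'I_q) (w : vtx) : Prop :=
  val w = rcons (behead (val v)) b /\ in_lang F (rcons (val v) b).

Definition arc (F : word -> Prop) (v w : vtx) : Prop := exists b, arc_lab F v b w.

Definition reach (F : word -> Prop) : vtx -> vtx -> Prop := clos_refl_trans vtx (arc F).

Definition is_SCC (F : word -> Prop) (S : {set vtx}) : Prop :=
  (exists v, v \in S) /\
  (forall u v, u \in S -> v \in S -> reach F u v) /\
  (forall u v, u \in S -> reach F u v -> reach F v u -> v \in S).

Definition is_max_SCC (F : word -> Prop) (S : {set vtx}) : Prop :=
  is_SCC F S /\ forall S', is_SCC F S' -> #|S'| <= #|S|.

Fixpoint lexle (s t : word) : bool :=
  match s, t with
  | [::], _ => true
  | _ :: _, [::] => false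
  | x :: s', y :: t' => (x < y) || ((x == y) && lexle s' t')
  end.

Definition is_lex_max (S : {set vtx}) (m : vtx) : Prop :=
  m \in S /\ forall v, v \in S -> lexle (val v) (val m).

Definition max_label (F : word -> Prop) (S : {set vtx}) (u : vtx) (b : 'I_q) : Prop :=
  u \in S /\ (exists w, w \in S /\ arc_lab F u b w) /\
  forall b' w', w' \in S -> arc_lab F u b' w' -> b' <= b.

Definition T_arc (F : word -> Prop) (S : {set vtx}) (m u w : vtx) : Prop :=
  u != m /\ w \in S /\ exists b, max_label F S u b /\ arc_lab F u b w.

Definition T_cycle (F : word -> Prop) (S : {set vtx}) (m : vtx) (c : seq vtx) : Prop :=
  match c with
  | [::] => False
  | x0 :: _ => uniq c /\ forall i, i < size c ->
      T_arc F S m (nth x0 c i) (nth x0 c (i.+1 %% size c))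
  end.

Definition glen (m u : vtx) : nat :=
  \max_(k < n.+1 | take k (val m) == drop (n - k) (val u)) k.

(* alpha(u) = m_{|g(u)|+1} (1-indexed), i.e. nth (0-indexed) |g(u)|;
   the default is irrelevant since |g(u)| < n for u <> m. *)
Definition alpha (m u : vtx) (dflt : 'I_q) : 'I_q := nth dflt (val m) (glen m u).

Definition floor_vtx (m u : vtx) : bool := (u != m) && (glen m u == 0).

Definition restricted (F : word -> Prop) (S : {set vtx}) (m u : vtx) : Prop :=
  u != m /\ exists b, max_label F S u b /\ b < alpha m u b.

Definition restrictedb F S m u : bool := `[< restricted F S m u >].

End DeBruijn.

(* Main.v *)
Require Import Defs.
From mathcomp Require Import all_boot.
From mathcomp Require Import boolp.
From Stdlib Require Import Relation_Operators.
From mathcomp Require Import zify.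
Set Implicit Arguments. Unset Strict Implicit.

Ltac clia := repeat match goal with H : _ |- _ =>
  match type of H with
  | is_true (_ <= _) => fail 1
  | @eq nat _ _ => fail 1
  | _ => clear H
  end end; lia.

Section Aux.
Variables (q n : nat) (F : seq 'I_q -> Prop) (S : {set n.-tuple 'I_q}).

Lemma reach_first (a b : n.-tuple 'I_q) : reach F a b ->
  a = b \/ exists y, Defs.arc F a y /\ reach F y b.
Proof.
elim=> [x y H|x|x y z Hxy IH1 Hyz IH2]; first by right; exists y; split=> //; apply: rt_refl.
  by left.
case: IH1 => [E|[y' [H1 H2]]]; first by rewrite E; exact: IH2.
by right; exists y'; split=> //; apply: rt_trans H2 Hyz.
Qed.

Lemma succ_in (a a' x : n.-tuple 'I_q) : is_SCC F S -> a \in S -> a' \in S ->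
  a != a' -> x \in S -> exists y, y \in S /\ Defs.arc F x y.
Proof.
move=> [_ [HR HC]] Ha Ha' Haa' Hx.
have [u [Hu Hxu]] : exists u, u \in S /\ x != u.
  case: (eqVneq x a) => [->|]; [by exists a' | by exists a].
have := reach_first (HR _ _ Hx Hu); case=> [E|[y [Hy Hyu]]]; first by rewrite E eqxx in Hxu.
exists y; split=> //; apply: (HC x) => //; first exact: rt_step.
exact: rt_trans Hyu (HR _ _ Hu Hx).
Qed.

Lemma walk_in (a a' : n.-tuple 'I_q) : is_SCC F S -> a \in S -> a' \in S ->
  a != a' -> forall k, k <= n -> forall x, x \in S ->
  exists y, y \in S /\ take (n - k) (val y) = drop k (val x).
Proof.
move=> HS Ha Ha' Haa'; elim=> [|k IH] Hk x Hx.
  by exists x; split=> //; rewrite subn0 drop0 -{1}(size_tuple x) take_size.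
have [y [Hy Hxy]] := IH (ltnW Hk) x Hx.
have [z [Hz [b [Hzv _]]]] := succ_in HS Ha Ha' Haa' Hy.
exists z; split=> //; rewrite Hzv -cats1 takel_cat; last first.
  by rewrite size_behead size_tuple; clia.
rewrite -drop1 take_drop.
have -> : n - k.+1 + 1 = n - k by clia.
by rewrite Hxy drop_drop add1n.
Qed.

Lemma lexle_gt (P t t' : seq 'I_q) (a b : 'I_q) : b < a ->
  lexle (rcons P a ++ t) (rcons P b ++ t') = false.
Proof.
move=> Hba; rewrite !cat_rcons; elim: P => [|x P IH] /=.
  by rewrite ltnNge (ltnW Hba) /= -(inj_eq val_inj) /= (gtn_eqF Hba).
by rewrite ltnn eqxx IH.
Qed.

Lemma lex_contra (m y : n.-tuple 'I_q) j P (a b : 'I_q) : b < a ->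
  take j.+1 (val y) = rcons P a -> take j.+1 (val m) = rcons P b ->
  lexle (val y) (val m) = false.
Proof.
move=> Hba Hy Hm.
by rewrite -(cat_take_drop j.+1 (val y)) -(cat_take_drop j.+1 (val m)) Hy Hm lexle_gt.
Qed.

Lemma glen_spec (m u : n.-tuple 'I_q) :
  glen m u <= n /\ take (glen m u) (val m) = drop (n - glen m u) (val u).
Proof.
rewrite /glen.
have H0 : 0 < #|[pred k : 'I_n.+1 | take k (val m) == drop (n - k) (val u)]|.
  apply/card_gt0P; exists ord0; by rewrite inE /= take0 subn0 drop_oversize ?size_tuple.
have [i0 Hi0 ->] := eq_bigmax_cond (fun k : 'I_n.+1 => val k) H0.
by split; [rewrite -ltnS ltn_ord | move: Hi0; rewrite inE => /eqP].
Qed.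

Lemma glen_max (m u : n.-tuple 'I_q) k : k <= n ->
  take k (val m) = drop (n - k) (val u) -> k <= glen m u.
Proof.
move=> Hk E; rewrite /glen.
have := leq_bigmax_cond (P := fun i : 'I_n.+1 => take i (val m) == drop (n - i) (val u))
  (F := fun i : 'I_n.+1 => val i) (Ordinal (Hk : k < n.+1)).
by apply; rewrite /= E.
Qed.

Lemma glen_lt (m u : n.-tuple 'I_q) : u != m -> glen m u < n.
Proof.
move=> Hu; have [H1 H2] := glen_spec m u; rewrite ltn_neqAle H1 andbT.
apply/eqP=> E; move: H2; rewrite E subnn drop0 -{1}(size_tuple m) take_size => E'.
by move: Hu; rewrite (val_inj E') eqxx.
Qed.

Lemma max_label_uniq (u : n.-tuple 'I_q) b1 b2 :
  max_label F S u b1 -> max_label F S u b2 -> b1 = b2.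
Proof.
move=> [_ [[w1 [Hw1 A1]] B1]] [_ [[w2 [Hw2 A2]] B2]].
apply: val_inj; apply/eqP; rewrite eqn_leq (B2 _ _ Hw1 A1) (B1 _ _ Hw2 A2) //.
Qed.

Lemma key (m a' : n.-tuple 'I_q) (u w : n.-tuple 'I_q) :
  is_SCC F S -> is_lex_max S m -> a' \in S -> a' != m ->
  T_arc F S m u w -> w != m ->
  restrictedb F S m u = floor_vtx m w.
Proof.
move=> HS [Hm Hmax] Ha' Ham [Hum [Hw [b [Hb [Hwv _]]]]] Hwm.
have Hu : u \in S by case: Hb.
have Hma : m != a' by rewrite eq_sym.
have Hg := glen_lt Hum.
set g := glen m u in Hg *.
have [_ Hgs] := glen_spec m u; rewrite -/g in Hgs.
set M := val m.
have sM : size M = n by rewrite size_tuple.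
have su : size (val u) = n by rewrite size_tuple.
have HR : restrictedb F S m u = (b < nth b M g).
  rewrite /restrictedb -[RHS]asboolb; apply: asbool_equiv_eq; split.
    move=> [_ [b' [Hb' Hlt]]]; have E := max_label_uniq Hb' Hb.
    by rewrite -E.
  by move=> H; split=> //; exists b.
rewrite HR /floor_vtx Hwm /=.
have Hsw : forall k, k < n -> drop (n - k.+1) (val w) = rcons (drop (n - k) (val u)) b.
  move=> k Hk; rewrite Hwv drop_rcons; last by rewrite size_behead su; clia.
  by rewrite -drop1 drop_drop; congr rcons; congr drop; clia.
have Hgm : take g.+1 M = rcons (take g M) (nth b M g) by rewrite (take_nth b) // sM.
case: (ltngtP b (nth b M g)) => Hcmp.
-
  apply/esym/eqP; apply: contraTeq (isT : true) => Hk.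
  have [Hkn Hks] := glen_spec m w.
  move: Hkn Hks Hk; set k := glen m w => Hkn Hks Hk.
  have [j Ej] : exists j, k = j.+1 by case: (k) Hk => [|j] //; exists j.
  rewrite Ej in Hkn Hks.
  rewrite Hsw // (take_nth b) ?sM // in Hks.
  case/rcons_inj: Hks => Hj Hbj.
  have Hjg : j <= g by apply: glen_max => //; clia.
  have Hjg' : j < g.
    rewrite ltn_neqAle Hjg andbT; apply/eqP => E; by move: Hcmp; rewrite -{1}Hbj E ltnn.
  have [y [Hy Ey]] := walk_in HS Hm Ha' Hma (k := g - j) ltac:(clia) Hm.
  have := Hmax y Hy.
  suff -> : lexle (val y) (val m) = false by [].
  apply: (lex_contra (j := j) (P := take j M) (a := nth b M g) (b := b)) => //.
    have Hle : j.+1 <= n - (g - j) by clia.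
    rewrite -(take_takel (val y) Hle).
    rewrite Ey (take_nth b); last by rewrite size_drop sM; clia.
    rewrite nth_drop; have -> : g - j + j = g by clia.
    congr rcons.
    rewrite Hj take_drop.
    have -> : j + (g - j) = g by clia.
    by rewrite Hgs drop_drop; have -> : g - j + (n - g) = n - j by clia.
  by rewrite (take_nth b) ?sM // Hbj.
-
  exfalso.
  have [y [Hy Ey]] := walk_in HS Hm Ha' Hma (k := n - g.+1) ltac:(clia) Hw.
  have := Hmax y Hy.
  suff -> : lexle (val y) (val m) = false by [].
  apply: (lex_contra (j := g) (P := take g M) (a := b) (b := nth b M g)) => //.
  have -> : g.+1 = n - (n - g.+1) by clia.
  by rewrite Ey Hsw // Hgs.
-
  apply/esym/negbTE; rewrite -lt0n.
  apply: leq_trans (glen_max (k := g.+1) _ _) => //.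
  rewrite Hsw // -Hgs Hgm; congr rcons; exact: val_inj.
Qed.

End Aux.

Lemma count_nth_eq (T : eqType) (p p' : pred T) (s s' : seq T) x0 :
  size s = size s' -> (forall i, i < size s -> p (nth x0 s i) = p' (nth x0 s' i)) ->
  count p s = count p' s'.
Proof.
move=> Hs H.
have E1 : forall (r : pred T) t, count r t = count idfun (map r t).
  by move=> r t; rewrite count_map.
rewrite (E1 p) (E1 p'); congr count.
apply: (eq_from_nth (x0 := false)); rewrite ?size_map // => i Hi.
by rewrite !(nth_map x0) // -?Hs ?H // -(size_map p).
Qed.

Theorem corollary2 (q n : nat) (F : seq 'I_q -> Prop)
    (S : {set n.-tuple 'I_q}) (m : n.-tuple 'I_q)
    (n_pos : 0 < n)
    (HS : is_max_SCC F S) (Hm : is_lex_max S m)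
    (c : seq (n.-tuple 'I_q)) (l : nat) :
  T_cycle F S m c ->
  count (restrictedb F S m) c = l ->
  count (floor_vtx m) c = l.
Proof.
case: c => [//|x0 c'] [_ Hc] <-.
have H0 := Hc 0 isT; rewrite /= in H0.
have Hx0m : x0 != m by case: H0.
have Hx0 : x0 \in S by case: H0 => _ [_ [b [[]]]].
have Hsc : forall i, i < (size c').+1 ->
  restrictedb F S m (nth x0 (x0 :: c') i) = floor_vtx m (nth x0 (x0 :: c') (i.+1 %% (size c').+1)).
  move=> i Hi; apply: (key HS.1 Hm Hx0 Hx0m (Hc i Hi)).
  by case: (Hc _ (ltn_pmod i.+1 (ltn0Sn (size c')))).
have -> : count (floor_vtx m) (x0 :: c') = count (floor_vtx m) (rcons c' x0).
  by rewrite -cats1 count_cat /= addn0 addnC.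
apply: (count_nth_eq (x0 := x0)); first by rewrite size_rcons.
move=> i Hi; rewrite size_rcons in Hi; rewrite Hsc // nth_rcons.
case: (ltngtP i (size c')) => Hic.
- by rewrite modn_small.
- by move: Hi; rewrite ltnS leqNgt Hic.
- by rewrite -Hic modnn.
Qed.
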